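(* For all odd integers $n\ge1$ and real numbers $a\ge1$, $x\in(0,\pi)$, we have $S_{n,a}(x)\ge\sin(x)$. Equality holds if and only if $n=1$, or $n=3$, $a=1$, $x=2\pi/3$.
   Context: For a real number $a$ and integers $0\le m$, $\binom{m+a}{m}=\frac{(a+1)(a+2)\cdots(a+m)}{m!}$ (equal to $1$ when $m=0$). For an integer $n\ge1$, $S_{n,a}(x)=\sum_{j=1}^n\binom{n+a-j}{n-j}\sin(jx)$. *)

(* Defs.v *)
From Stdlib Require Import Reals Lra Lia Factorial.
Open Scope R_scope.

Fixpoint rise_prod (a : R) (m : nat) : R :=
  match m with
  | O => 1
  | S k => rise_prod a k * (a + INR (S k))
  end.

(* Generalized binomial coefficient  binom(m+a, m) = (a+1)...(a+m)/m!. *)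
Definition gbinom (m : nat) (a : R) : R := rise_prod a m / INR (fact m).

Definition S_na (n : nat) (a x : R) : R :=
  sum_f 1 n (fun j => gbinom (n - j) a * sin (INR j * x)).

(* Main.v *)
Require Import Defs.
From Stdlib Require Import Reals Lra Lia Factorial.
Open Scope R_scope.

Definition conv (g f : nat -> R) (n : nat) : R :=
  sum_f_R0 (fun i => g (n - i)%nat * f (S i)) n.
Definition nab (g : nat -> R) (k : nat) : R :=
  g k - match k with O => 0 | S k' => g k' end.
Definition del (f : nat -> R) (k : nat) : R :=
  f k - match k with O => 0 | S k' => f k' end.

Lemma conv_ext g g' f f' n : (forall k, g k = g' k) -> (forall k, f k = f' k) ->
  conv g f n = conv g' f' n.
Proof. intros Hg Hf; unfold conv; apply sum_eq; intros; rewrite Hg, Hf; reflexivity. Qed.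

Lemma conv_scal g f r n : conv g (fun m => r * f m) n = r * conv g f n.
Proof. unfold conv; rewrite scal_sum; apply sum_eq; intros; ring. Qed.

Lemma conv_nab g f p : conv (nab g) f (S p) = conv g f (S p) - conv g f p.
Proof.
  unfold conv. rewrite !tech5. rewrite Nat.sub_diag.
  assert (H: sum_f_R0 (fun i => nab g (S p - i) * f (S i)) p =
    sum_f_R0 (fun i => g (S p - i)%nat * f (S i) - g (p - i)%nat * f (S i)) p).
  { apply sum_eq; intros i Hi. rewrite (Nat.sub_succ_l i p Hi). unfold nab. ring. }
  rewrite H, minus_sum. unfold nab. ring.
Qed.

Lemma conv_del g f p : f O = 0 -> conv g (del f) (S p) = conv g f (S p) - conv g f p.
Proof.
  intros H0. unfold conv.
  assert (H: sum_f_R0 (fun i => g (S p - i)%nat * del f (S i)) (S p) =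
    sum_f_R0 (fun i => g (S p - i)%nat * f (S i) - g (S p - i)%nat * f i) (S p)).
  { apply sum_eq; intros i Hi. unfold del. ring. }
  rewrite H, minus_sum. rewrite (decomp_sum (fun i => g (S p - i)%nat * f i)) by lia.
  simpl pred. rewrite H0. ring_simplify. reflexivity.
Qed.

Lemma conv_nab_del g f n : f O = 0 -> conv (nab g) f n = conv g (del f) n.
Proof.
  intros H0. destruct n as [|p].
  - unfold conv; simpl. unfold nab, del. rewrite H0. ring.
  - rewrite conv_nab, conv_del by exact H0. reflexivity.
Qed.

Lemma rise_shift a k : rise_prod (a - 1) (S k) = a * rise_prod a k.
Proof.
  induction k as [|k IH].
  - simpl. ring.
  - change (rise_prod (a-1) (S (S k))) with (rise_prod (a-1) (S k) * (a - 1 + INR (S (S k)))).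
    rewrite IH. change (rise_prod a (S k)) with (rise_prod a k * (a + INR (S k))). rewrite (S_INR (S k)). ring.
Qed.

Lemma nab_gbinom a k : nab (fun k => gbinom k a) k = gbinom k (a - 1).
Proof.
  unfold nab, gbinom. destruct k as [|k].
  - simpl. ring.
  - rewrite rise_shift. change (rise_prod a (S k)) with (rise_prod a k * (a + INR (S k))).
    change (fact (S k)) with (S k * fact k)%nat. rewrite mult_INR.
    pose proof (INR_fact_lt_0 k). rewrite S_INR. pose proof (pos_INR k).
    field. split; lra.
Qed.

Lemma rise_nonneg a k : 1 <= a -> 0 <= rise_prod (a - 2) k.
Proof.
  intros Ha. induction k as [|k IH]; cbn [rise_prod]. lra.
  apply Rmult_le_pos; auto. rewrite S_INR. pose proof (pos_INR k). lra.
Qed.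

Lemma gbinom_nonneg a k : 1 <= a -> 0 <= gbinom k (a - 2).
Proof.
  intros Ha. unfold gbinom. pose proof (INR_fact_lt_0 k).
  apply Rmult_le_pos. apply rise_nonneg; auto. left; apply Rinv_0_lt_compat; auto.
Qed.

Section Trig.
Variable x : R.
Hypothesis Hx : 0 < x < PI.

Lemma sinx_pos : 0 < sin x.
Proof. apply sin_gt_0; lra. Qed.

Lemma cosx_lt1 : cos x < 1.
Proof.
  pose proof sinx_pos. pose proof (sin2_cos2 x). unfold Rsqr in *.
  pose proof (COS_bound x). nra.
Qed.

Lemma bound_le k : Rabs (sin (INR k * x)) <= INR k * sin x.
Proof.
  pose proof sinx_pos as Hs.
  induction k as [|k IH].
  - simpl. rewrite Rmult_0_l, sin_0, Rabs_R0. lra.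
  - rewrite S_INR. replace ((INR k + 1) * x) with (INR k * x + x) by ring.
    rewrite sin_plus.
    pose proof (Rabs_triang (sin (INR k * x) * cos x) (cos (INR k * x) * sin x)).
    rewrite !Rabs_mult in H.
    pose proof (COS_bound x). pose proof (COS_bound (INR k * x)).
    assert (Rabs (cos x) <= 1) by (apply Rabs_le; lra).
    assert (Rabs (cos (INR k * x)) <= 1) by (apply Rabs_le; lra).
    rewrite (Rabs_right (sin x)) in H by lra.
    pose proof (Rabs_pos (sin (INR k * x))).
    pose proof (Rabs_pos (cos x)).
    pose proof (Rabs_pos (cos (INR k * x))).
    nra.
Qed.

Lemma bound_lt k : (1 <= k)%nat -> Rabs (sin (INR (S k) * x)) < INR (S k) * sin x.
Proof.
  intros Hk. pose proof sinx_pos as Hs. pose proof (bound_le k) as IH.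
  assert (Hk' : 1 <= INR k) by (apply (le_INR 1); auto).
  rewrite S_INR. replace ((INR k + 1) * x) with (INR k * x + x) by ring.
  rewrite sin_plus.
  pose proof (Rabs_triang (sin (INR k * x) * cos x) (cos (INR k * x) * sin x)).
  rewrite !Rabs_mult in H.
  pose proof (COS_bound x). pose proof (COS_bound (INR k * x)).
  pose proof cosx_lt1.
  assert (Rabs (cos x) < 1).
  { pose proof (sin2_cos2 x). unfold Rsqr in *. apply Rabs_def1; nra. }
  assert (Rabs (cos (INR k * x)) <= 1) by (apply Rabs_le; lra).
  rewrite (Rabs_right (sin x)) in H by lra.
  pose proof (Rabs_pos (sin (INR k * x))).
  pose proof (Rabs_pos (cos x)).
  pose proof (Rabs_pos (cos (INR k * x))).
  assert (A1: Rabs (sin (INR k * x)) * Rabs (cos x) <= INR k * sin x * Rabs (cos x))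
    by (apply Rmult_le_compat_r; lra).
  assert (A2: INR k * sin x * Rabs (cos x) < INR k * sin x).
  { assert (0 < INR k * sin x) by nra. nra. }
  assert (A3: Rabs (cos (INR k * x)) * sin x <= sin x) by nra.
  lra.
Qed.

Definition K (m : nat) : R := INR (S m) * sin x - sin (INR (S m) * x).

Lemma K0 : K O = 0.
Proof. unfold K. simpl INR. rewrite !Rmult_1_l. ring. Qed.

Lemma K_nonneg m : 0 <= K m.
Proof. unfold K. pose proof (bound_le (S m)). pose proof (Rle_abs (sin (INR (S m) * x))). lra. Qed.

Lemma K_pos m : (1 <= m)%nat -> 0 < K m.
Proof. intros. unfold K. pose proof (bound_lt m H). pose proof (Rle_abs (sin (INR (S m) * x))). lra. Qed.

Lemma K1 : K 1 = 2 * (1 - cos x) * sin x.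
Proof.
  unfold K. replace (INR 2) with 2 by (simpl; ring). rewrite sin_2a. ring.
Qed.

Lemma deldelK m : del (del K) m = 2 * (1 - cos x) * sin (INR m * x).
Proof.
  destruct m as [|[|p]].
  - unfold del. rewrite K0. simpl INR. rewrite Rmult_0_l, sin_0. ring.
  - unfold del. rewrite K0, K1. simpl INR. rewrite Rmult_1_l. ring.
  - unfold del, K. rewrite !S_INR. set (t := INR p).
    replace ((t + 1 + 1 + 1) * x) with ((t+1+1)*x + x) by ring.
    replace ((t + 1) * x) with ((t+1+1)*x - x) by ring.
    rewrite sin_plus, sin_minus. ring.
Qed.

End Trig.

Lemma S_conv p a x : S_na (S p) a x = conv (fun k => gbinom k a) (fun m => sin (INR m * x)) p.
Proof.
  unfold S_na, sum_f, conv. replace (S p - 1)%nat with p by lia.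
  apply sum_eq; intros i Hi. replace (i + 1)%nat with (S i) by lia.
  replace (S p - S i)%nat with (p - i)%nat by lia. reflexivity.
Qed.

Lemma ident p a x : 2 * (1 - cos x) * S_na (S p) a x = conv (fun k => gbinom k (a - 2)) (K x) p.
Proof.
  rewrite S_conv, <- conv_scal.
  rewrite (conv_ext _ (fun k => gbinom k a) _ (del (del (K x)))); [| reflexivity | intros; symmetry; apply deldelK].
  rewrite <- conv_nab_del by (unfold del; rewrite K0; ring).
  rewrite (conv_ext _ (fun k => gbinom k (a - 1)) _ (del (K x))); [| apply nab_gbinom | reflexivity].
  rewrite <- conv_nab_del by apply K0.
  apply conv_ext; [| reflexivity]. intros k. rewrite nab_gbinom. f_equal. ring.
Qed.

Lemma conv_split g f q : conv g f (S q) = sum_f_R0 (fun i => g (S q - i)%nat * f (S i)) q + g O * f (S (S q)).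
Proof. unfold conv. rewrite tech5, Nat.sub_diag. reflexivity. Qed.

Lemma Kdiff x m : K x (2*m+1) - K x 1 = 2 * (INR m * sin x - cos ((INR m + 2) * x) * sin (INR m * x)).
Proof.
  unfold K. replace (INR (S (2*m+1))) with (2*INR m + 2) by (rewrite S_INR, plus_INR, mult_INR; simpl; ring).
  replace (INR 2) with 2 by (simpl; ring).
  replace ((2 * INR m + 2) * x) with ((INR m + 2) * x + INR m * x) by ring.
  replace (2 * x) with ((INR m + 2) * x - INR m * x) by ring.
  rewrite sin_plus, sin_minus. ring.
Qed.

Lemma cos_one y : cos y = 1 -> 0 < y < 3 * PI -> y = 2 * PI.
Proof.
  intros Hc Hy. pose proof (sin2_cos2 y). unfold Rsqr in H. rewrite Hc in H.
  assert (sin y = 0) by nra.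
  destruct (sin_eq_0_0 y H0) as [k Hk]. pose proof PI_RGT_0.
  assert (0 < IZR k) by (subst; nra). assert (IZR k < 3) by (subst; nra).
  apply lt_IZR in H2. apply lt_IZR in H3.
  assert (k = 1%Z \/ k = 2%Z) as [-> | ->] by lia.
  - subst. rewrite Rmult_1_l, cos_PI in Hc. lra.
  - subst. reflexivity.
Qed.

Lemma gb0 b : gbinom 0 b = 1.
Proof. unfold gbinom. simpl. field. Qed.

Lemma cs_le_abs u v : cos u * sin v <= Rabs (sin v).
Proof.
  pose proof (Rle_abs (cos u * sin v)). rewrite Rabs_mult in H.
  pose proof (COS_bound u). assert (Rabs (cos u) <= 1) by (apply Rabs_le; lra).
  pose proof (Rabs_pos (sin v)). pose proof (Rabs_pos (cos u)). nra.
Qed.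

Theorem theorem3p1 (n : nat) (a x : R) :
  (1 <= n)%nat -> Nat.Odd n -> 1 <= a -> 0 < x < PI ->
  S_na n a x >= sin x /\
  (S_na n a x = sin x <-> (n = 1%nat \/ (n = 3%nat /\ a = 1 /\ x = 2 * PI / 3))).
Proof.
  intros Hn [m Hm] Ha Hx. subst n.
  pose proof (sinx_pos x Hx) as Hs. pose proof (cosx_lt1 x Hx) as Hc.
  destruct m as [|m'].
  - assert (Hid := ident 0 a x). unfold conv in Hid. simpl in Hid.
    rewrite gb0, K1 in Hid. simpl (2*0+1)%nat.
    assert (S_na 1 a x = sin x) by nra.
    split; [lra|]. split; [intros; left; reflexivity | intros; exact H].
  - set (q := (2*m'+1)%nat).
    set (R0 := sum_f_R0 (fun i => gbinom (S q - i) (a - 2) * K x (S i)) q).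
    assert (Hid : 2*(1-cos x) * S_na (2*S m'+1) a x = R0 + K x (2 * S m' + 1)).
    { replace (2*S m'+1)%nat with (S (S q)) by (unfold q; lia).
      rewrite ident, conv_split, gb0. unfold R0. ring. }
    assert (HR : 0 <= R0).
    { apply cond_pos_sum. intros i. apply Rmult_le_pos; [apply gbinom_nonneg; auto | apply K_nonneg; auto]. }
    pose proof (Kdiff x (S m')) as Hkd.
    pose proof (bound_le x Hx (S m')) as Hb.
    pose proof (cs_le_abs ((INR (S m') + 2) * x) (INR (S m') * x)) as Hcs.
    pose proof (K1 x) as HK1.
    assert (Hmain : 2*(1-cos x) * (S_na (2*S m'+1) a x - sin x) = R0 + (K x (2 * S m' + 1) - K x 1)) by lra.
    split.
    + assert (0 <= 2*(1-cos x) * (S_na (2*S m'+1) a x - sin x)) by lra. nra.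
    + split.
      * intros Heq. right. rewrite Heq in Hmain. rewrite Rminus_diag, Rmult_0_r in Hmain.
        assert (HR0 : R0 = 0) by lra.
        assert (HKd : INR (S m') * sin x - cos ((INR (S m') + 2) * x) * sin (INR (S m') * x) = 0) by lra.
        destruct m' as [|m''].
        -- split; [reflexivity|].
           unfold R0, q in HR0. simpl in HR0.
           pose proof (K_pos x Hx 2 ltac:(lia)). pose proof (gbinom_nonneg a 1 Ha).
           pose proof (gbinom_nonneg a 2 Ha). pose proof (K_nonneg x Hx 1).
           assert (gbinom 1 (a-2) = 0) by nra.
           unfold gbinom in H3. simpl in H3.
           split; [lra|].
           simpl INR in HKd. rewrite !Rmult_1_l in HKd.
           assert (cos (3 * x) = 1).
           { replace (3 * x) with ((1+2)*x) by ring. nra. }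
           apply cos_one in H4; [lra | lra].
        -- exfalso. pose proof (bound_lt x Hx (S m'') ltac:(lia)). lra.
      * intros [H | [H3 [-> ->]]]; [lia|].
        assert (m' = 0%nat) by lia. subst m'.
        assert (HR0 : R0 = 0).
        { unfold R0, q. simpl. unfold gbinom. simpl. field. }
        simpl INR in Hkd. rewrite !Rmult_1_l in Hkd.
        replace ((1 + 2) * (2 * PI / 3)) with (2 * PI) in Hkd by field.
        rewrite cos_2PI in Hkd.
        assert (HZ : 2*(1-cos (2*PI/3)) * (S_na (2*1+1) 1 (2*PI/3) - sin (2*PI/3)) = 0) by lra.
        apply Rmult_integral in HZ. destruct HZ; lra.
Qed.
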